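(* Let $G$ be an abelian group that is not finitely generated, let $N=\{1,\alpha,\alpha^2,\alpha^3,\alpha^4=0\}$ be the monogenic monoid generated by $\alpha$ with $\alpha^5=\alpha^4$, let $P=G\times N$ (direct product of monoids), and let $\sim$ be the congruence on $P$ which is the union of equality with $\{((g,\alpha^k),(h,\alpha^k)) : g,h\in G,\ k\in\{3,4\}\}$. Let $S=P/\sim$ (the Fountain monoid). Then an $S$-act $A$ is almost pure if and only if it is absolutely pure.
   Context: A (right) $S$-act is a set $A$ with a map $A\times S\to A$, $(a,s)\mapsto as$, such that $a1=a$ and $a(st)=(as)t$. Given an $S$-act $A$ and a set $X$ of variables, an equation over $A$ is an expression of one of the forms $xs=yt$, $xs=xt$ or $xs=a$ with $x,y\in X$, $s,t\in S$, $a\in A$. If $A$ is a subact of $B$, a solution in $B$ of a set $\Sigma$ of such equations is a family $(b_x)_{x\in X}$ in $B$ with $b_xs=b_yt$ for each $xs=yt\in\Sigma$ and $b_xs=a$ for each $xs=a\in\Sigma$. $\Sigma$ is consistent if it has a solution in some $S$-act containing $A$ as a subact. $A$ is almost pure if every finite consistent set of equations over $A$ in one variable has a solution in $A$, and absolutely pure if every finite consistent set of equations over $A$ has a solution in $A$. *)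

(* Defs.v *)
From HB Require Import structures.
From mathcomp Require Import all_boot all_algebra.
Set Implicit Arguments. Unset Strict Implicit. Unset Printing Implicit Defensive.
Import GRing.Theory.
Local Open Scope ring_scope.

Section Fountain.
Variable G : zmodType.

Definition finitely_generated : Prop :=
  exists s : seq G, forall g : G,
    exists c : 'I_(size s) -> int, g = \sum_(i < size s) s`_i *~ c i.

(* P = G x N, with N = {1, a, a^2, a^3, a^4 = 0}, a^5 = a^4;
   the element a^k of N is encoded by k : 'I_5. *)
Definition P := (G * 'I_5)%type.
Definition mulP (p q : P) : P := (p.1 + q.1, inord (minn (p.2 + q.2) 4)).
Definition oneP : P := (0, ord0).

Definition fountain_rel (p q : P) : Prop :=
  p = q \/ (nat_of_ord p.2 = nat_of_ord q.2 /\ (3 <= p.2)%N).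

(* S = P / ~, represented by normal forms: classes of (g,a^k) for k < 3 are
   singletons; the classes of a^3 and a^4 are G x {a^3}, G x {a^4}. *)
Inductive S := SG of G & 'I_3 | S3 | S4.

Definition proj (p : P) : S :=
  if (p.2 < 3)%N then SG p.1 (inord p.2)
  else if nat_of_ord p.2 == 3%N then S3 else S4.

Definition rep (x : S) : P :=
  match x with
  | SG g k => (g, inord k)
  | S3 => (0, inord 3)
  | S4 => (0, inord 4)
  end.

Definition mulS (x y : S) : S := proj (mulP (rep x) (rep y)).
Definition oneS : S := proj oneP.

Definition is_act (A : Type) (act : A -> S -> A) : Prop :=
  (forall a, act a oneS = a) /\ (forall a s t, act a (mulS s t) = act (act a s) t).

(* Equations over A in variables X: x s = y t (covers x s = x t) and x s = a. *)
Inductive equation (X A : Type) :=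
  | EqVar of X & S & X & S
  | EqConst of X & S & A.

Fixpoint inlist (T : Type) (e : T) (l : seq T) : Prop :=
  match l with [::] => False | x :: l' => x = e \/ inlist e l' end.

Definition solves (X A B : Type) (actB : B -> S -> B) (iota : A -> B)
  (b : X -> B) (e : equation X A) : Prop :=
  match e with
  | EqVar x s y t => actB (b x) s = actB (b y) t
  | EqConst x s a => actB (b x) s = iota a
  end.

(* Σ is consistent: it has a solution in some S-act B containing A as a subact
   (A embedded via an injective act morphism iota). *)
Definition consistent (A : Type) (actA : A -> S -> A) (X : Type)
  (Sigma : seq (equation X A)) : Prop :=
  exists (B : Type) (actB : B -> S -> B) (iota : A -> B),
    [/\ is_act actB, injective iota,
        (forall a s, iota (actA a s) = actB (iota a) s) &
        exists b : X -> B, forall e, inlist e Sigma -> solves actB iota b e].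

Definition solvable_in (A : Type) (actA : A -> S -> A) (X : Type)
  (Sigma : seq (equation X A)) : Prop :=
  exists b : X -> A, forall e, inlist e Sigma -> solves actA id b e.

Definition almost_pure (A : Type) (actA : A -> S -> A) : Prop :=
  forall Sigma : seq (equation unit A),
    consistent actA Sigma -> solvable_in actA Sigma.

Definition absolutely_pure (A : Type) (actA : A -> S -> A) : Prop :=
  forall (X : Type) (Sigma : seq (equation X A)),
    consistent actA Sigma -> solvable_in actA Sigma.

End Fountain.

(* Main.v *)
Require Import Defs.
From HB Require Import structures.
From mathcomp Require Import all_boot all_algebra zify.
Set Implicit Arguments. Unset Strict Implicit. Unset Printing Implicit Defensive.
Import GRing.Theory.
Local Open Scope ring_scope.
Section SAlg.
Variable G : zmodType.
Local Notation S := (S G).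
Definition gk (g : G) (k : nat) : S := proj (g, inord (minn k 4)).
Definition lvl (s : S) : nat := match s with SG _ k => k | S3 => 3 | S4 => 4 end.
Definition grp (s : S) : G := match s with SG g _ => g | _ => 0 end.

Lemma gkE g k : gk g k = if (k < 3)%N then SG g (inord k) else if k == 3%N then @S3 G else @S4 G.
Proof.
rewrite /gk /proj /=.
have h5 : (minn k 4 < 5)%N by lia.
rewrite inordK //.
case: (ltnP k 3) => hk.
  have -> : minn k 4 = k by lia.
  by rewrite hk.
case: (ltnP k 4) => hk4.
  by have -> : k = 3%N by lia.
by have /negbTE -> : k != 3%N by lia.
Qed.

Lemma gk_eq g g' k k' : minn k 4 = minn k' 4 -> ((k < 3)%N -> g = g') -> gk g k = gk g' k'.
Proof.
move=> hk hg; rewrite !gkE.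
case: (ltnP k 3) => h1.
  have h2 : (k' < 3)%N by lia.
  rewrite h2 (hg h1); congr SG; apply: val_inj; rewrite /= !inordK; lia.
have h2 : (k' < 3)%N = false by lia.
rewrite h2.
case: (k =P 3%N) => h3.
  by have -> : k' == 3%N by lia.
by have /negbTE -> : k' != 3%N by lia.
Qed.

Lemma gk_hi g k : (3 <= k)%N -> gk g k = gk 0 k.
Proof. by move=> h; apply: gk_eq => //; lia. Qed.

Lemma gk_min g k : gk g (minn k 4) = gk g k.
Proof. by apply: gk_eq => //; lia. Qed.

Lemma S_gk (s : S) : s = gk (grp s) (lvl s).
Proof.
case: s => [g k||] /=; rewrite gkE //=.
by rewrite ltn_ord inord_val.
Qed.

Lemma lvl_gk g k : lvl (gk g k) = minn k 4.
Proof.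
rewrite gkE; case: ltnP => h /=; first by rewrite inordK; lia.
by case: eqP => h' /=; lia.
Qed.

Lemma grp_gk g k : grp (gk g k) = if (k < 3)%N then g else 0.
Proof. by rewrite gkE; case: ltnP => h //=; case: eqP. Qed.

Lemma rep_gk g k : rep (gk g k) = (if (k < 3)%N then g else 0, inord (minn k 4)).
Proof.
rewrite gkE; case: ltnP => h /=.
  congr pair; apply: val_inj; rewrite /= !inordK //; lia.
case: eqP => h' /=.
  congr pair; apply: val_inj; rewrite /= !inordK //; lia.
congr pair; apply: val_inj; rewrite /= !inordK //; lia.
Qed.

Lemma proj_gk (p : P G) : proj p = gk p.1 p.2.
Proof.
case: p => x n; rewrite /gk /=; have -> : minn n 4 = n by have := ltn_ord n; lia.
by rewrite inord_val.
Qed.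

Lemma mulS_gk g h k l : mulS (gk g k) (gk h l) = gk (g + h) (k + l).
Proof.
rewrite /mulS !rep_gk /mulP proj_gk /= !inordK; try lia.
apply: gk_eq; first lia.
move=> hl; have h1 : (k < 3)%N by lia. have h2 : (l < 3)%N by lia.
by rewrite h1 h2.
Qed.

Lemma oneS_gk : oneS G = gk 0 0.
Proof. by rewrite /oneS /oneP proj_gk. Qed.

Lemma mulSA (s t r : S) : mulS (mulS s t) r = mulS s (mulS t r).
Proof.
rewrite (S_gk s) (S_gk t) (S_gk r) !mulS_gk; apply: gk_eq; first lia.
by move=> _; rewrite addrA.
Qed.

Lemma mul1S (r : S) : mulS (oneS G) r = r.
Proof. by rewrite oneS_gk [in LHS](S_gk r) mulS_gk add0r add0n -S_gk. Qed.

Lemma mulSC (s t : S) : mulS s t = mulS t s.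
Proof.
rewrite (S_gk s) (S_gk t) !mulS_gk; apply: gk_eq; first lia.
by move=> _; rewrite addrC.
Qed.
Lemma lvl_le4 (s : S) : (lvl s <= 4)%N.
Proof. by case: s => [g k||] //=; have := ltn_ord k; lia. Qed.

End SAlg.

From Stdlib Require Import ClassicalEpsilon FunctionalExtensionality PropExtensionality.

Definition pb (P : Prop) : bool := if excluded_middle_informative P then true else false.
Lemma pbP (P : Prop) : reflect P (pb P).
Proof. by rewrite /pb; case: excluded_middle_informative => h; constructor. Qed.

Section Main.
Variable G : zmodType.
Local Notation S := (S G).
Local Notation alpha k := (gk 0 k).
Local Notation ug g := (gk g 0).
Variables (A : Type) (actA : A -> S -> A) (hA : is_act actA).
Variables (E : Type) (actE : E -> S -> E) (hE : is_act actE).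
Variables (iota : A -> E) (inj : injective iota)
  (hmor : forall a s, iota (actA a s) = actE (iota a) s).
Variables (X : Type) (Sigma : seq (equation G X A)) (e : X -> E)
  (he : forall q, inlist q Sigma -> solves actE iota e q).
Variable ihA : inhabited A.

Lemma actEM w s t : actE (actE w s) t = actE w (mulS s t).
Proof. by rewrite hE.2. Qed.
Lemma actE1 w : actE w (gk 0 0) = w.
Proof. by rewrite -oneS_gk hE.1. Qed.
Lemma actAM w s t : actA (actA w s) t = actA w (mulS s t).
Proof. by rewrite hA.2. Qed.

Definition T (w : E) : Prop := (exists a, w = iota a) \/ (forall s, actE w s = w).

Lemma T_act w s : T w -> T (actE w s).
Proof.
case=> [[a ->]|h]; first by left; exists (actA a s); rewrite hmor.
by right=> t; rewrite h h.
Qed.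

Lemma T_unit w g : T (actE w (ug g)) -> T w.
Proof.
move=> /(T_act (ug (- g))); rewrite actEM mulS_gk addrN actE1 //.
Qed.

Lemma T_top w : T (actE w (alpha 4)).
Proof.
right=> s; rewrite actEM (S_gk s) mulS_gk; congr actE; apply: gk_eq; first lia.
by move=> h; lia.
Qed.

Definition mlev (w : E) : nat :=
  if pb (T (actE w (alpha 0))) then 0 else
  if pb (T (actE w (alpha 1))) then 1 else
  if pb (T (actE w (alpha 2))) then 2 else
  if pb (T (actE w (alpha 3))) then 3 else 4.

Lemma mlev_spec w : [/\ (mlev w <= 4)%N, T (actE w (alpha (mlev w))) &
   forall j, (j < mlev w)%N -> ~ T (actE w (alpha j))].
Proof.
rewrite /mlev; case: pbP => h0; first by split.
case: pbP => h1; first by split => // -[|j] //.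
case: pbP => h2; first by split => // -[|[|j]] //.
case: pbP => h3; first by split => // -[|[|[|j]]] //.
split => //; first exact: T_top.
by move=> -[|[|[|[|j]]]].
Qed.

Lemma mlev_le w s : T (actE w s) -> (mlev w <= lvl s)%N.
Proof.
have -> : actE w s = actE (actE w (alpha (lvl s))) (ug (grp s)).
  by rewrite actEM mulS_gk add0r addn0 -S_gk.
move=> /T_unit hT.
case: (mlev_spec w) => _ _ hmin.
by rewrite leqNgt; apply/negP => /hmin.
Qed.

Let m (x : X) := mlev (e x).
Definition nd (x : X) := actE (e x) (alpha (m x)).
Definition key (x : X) : E -> Prop := fun w => exists g, w = actE (nd x) (ug g).

Let ihE : inhabited E := match ihA with inhabits a => inhabits (iota a) end.
Let ihG : inhabited G := inhabits 0.

Definition PK (K : E -> Prop) (j : nat) := exists w b, K w /\ w = actE b (alpha j).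
Definition MK K : nat :=
  if pb (PK K 4) then 4 else if pb (PK K 3) then 3 else
  if pb (PK K 2) then 2 else if pb (PK K 1) then 1 else 0.

Lemma MK_spec K : [/\ (MK K <= 4)%N, PK K 0 -> PK K (MK K) &
   forall j, (j <= 4)%N -> PK K j -> (j <= MK K)%N].
Proof.
rewrite /MK; case: pbP => h4; first by split.
case: pbP => h3; first by split => // -[|[|[|[|[|j]]]]].
case: pbP => h2; first by split => // -[|[|[|[|[|j]]]]].
case: pbP => h1; first by split => // -[|[|[|[|[|j]]]]].
by split => // -[|[|[|[|[|j]]]]].
Qed.

Definition uK K := epsilon ihE (fun w => K w /\ exists b, w = actE b (alpha (MK K))).

Lemma ex_nd x s : (m x <= lvl s)%N ->
  actE (e x) s = actE (nd x) (gk (grp s) (lvl s - m x)).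
Proof.
move=> h; rewrite /nd actEM mulS_gk add0r {1}(S_gk s); congr actE; congr gk; lia.
Qed.

Lemma key_nd x : key x (nd x).
Proof. by exists 0; rewrite actE1. Qed.

Lemma uK_spec x : key x (uK (key x)) /\ exists b, uK (key x) = actE b (alpha (MK (key x))).
Proof.
rewrite /uK; apply: (epsilon_spec ihE (fun w => key x w /\ exists b, w = actE b (alpha (MK (key x))))).
case: (MK_spec (key x)) => _ h _.
have h0 : PK (key x) 0 by exists (nd x), (nd x); split; [exact: key_nd | rewrite actE1].
case: (h h0) => w [b [Kw hw]].
by exists w; split => //; exists b.
Qed.

Lemma m_le_MK x : (m x <= MK (key x))%N.
Proof.
case: (MK_spec (key x)) => _ _; apply; first by case: (mlev_spec (e x)).
by exists (nd x), (e x); split; [exact: key_nd|].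
Qed.

Definition gx x := epsilon ihG (fun g => nd x = actE (uK (key x)) (ug g)).

Lemma gx_spec x : nd x = actE (uK (key x)) (ug (gx x)).
Proof.
rewrite /gx; apply: (epsilon_spec ihG (fun g => nd x = actE (uK (key x)) (ug g))); case: (uK_spec x) => [[g ->] _].
by exists (- g); rewrite actEM mulS_gk addrN actE1.
Qed.

Definition dx x := (MK (key x) - m x)%N.
Definition sig x := gk (gx x) (dx x).

Lemma key_eq x y g : nd x = actE (nd y) (ug g) -> key x = key y.
Proof.
move=> h; apply: functional_extensionality => w; apply: propositional_extensionality.
split=> -[h' ->].
  by exists (g + h'); rewrite h actEM mulS_gk.
exists (h' - g); rewrite h actEM mulS_gk; congr actE; congr gk; rewrite addrC subrK //.
Qed.

Definition EC := S -> E.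
Definition actC (f : EC) (s : S) : EC := fun r => f (mulS s r).
Definition jC (w : E) : EC := fun r => actE w r.

Lemma actC_act : is_act actC.
Proof.
split=> [f|f s t]; apply: functional_extensionality => r; rewrite /actC.
  by rewrite mul1S.
by rewrite mulSA.
Qed.

Lemma jC_inj : injective jC.
Proof. by move=> w w' h; rewrite -(hE.1 w) -(hE.1 w'); apply: (congr1 (fun f => f (oneS G)) h). Qed.

Lemma jC_mor w s : jC (actE w s) = actC (jC w) s.
Proof. by apply: functional_extensionality => r; rewrite /jC /actC actEM. Qed.

Lemma actCM f s t : actC (actC f s) t = actC f (mulS s t).
Proof. by rewrite actC_act.2. Qed.

Definition R K : EC := fun r => actE (uK K) (gk (grp r) (lvl r - MK K)).

Lemma R_alpha x : actC (R (key x)) (alpha (MK (key x))) = jC (uK (key x)).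
Proof.
case: (uK_spec x) => _ [b hb]; case: (MK_spec (key x)) => hM _ _.
apply: functional_extensionality => r; rewrite /R /actC /jC hb !actEM.
have hr : mulS (alpha (MK (key x))) r = gk (grp r) (MK (key x) + lvl r).
  by rewrite {1}(S_gk r) mulS_gk add0r.
rewrite hr lvl_gk grp_gk mulS_gk add0r.
congr actE; apply: gk_eq; first by have := lvl_le4 r; lia.
by move=> h; have -> : (MK (key x) + lvl r < 3)%N by lia.
Qed.

Lemma R_unit x g1 g2 : actE (uK (key x)) (ug g1) = actE (uK (key x)) (ug g2) ->
  actC (R (key x)) (ug g1) = actC (R (key x)) (ug g2).
Proof.
case: (uK_spec x) => _ [b hb]; case: (MK_spec (key x)) => hM _ _ h.
have H : forall g r, R (key x) (mulS (ug g) r) =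
    actE (actE (uK (key x)) (ug g)) (gk (grp r) (lvl r - MK (key x))).
  move=> g r; rewrite /R.
  have hr : mulS (ug g) r = gk (g + grp r) (lvl r) by rewrite {1}(S_gk r) mulS_gk.
  rewrite hr lvl_gk grp_gk hb !actEM !mulS_gk !add0r.
  have h4 := lvl_le4 r.
  congr actE; apply: gk_eq; first lia.
  by move=> h3; have -> : (lvl r < 3)%N by lia.
apply: functional_extensionality => r; rewrite /actC !H h //.
Qed.

Lemma claimA x s : (m x <= lvl s)%N ->
  actC (R (key x)) (mulS (sig x) s) = jC (actE (e x) s).
Proof.
move=> h; have hm := m_le_MK x.
have -> : mulS (sig x) s =
    mulS (alpha (MK (key x))) (gk (gx x + grp s) (lvl s - m x)).
  rewrite /sig {1}(S_gk s) !mulS_gk add0r; apply: gk_eq => //.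
  by rewrite /dx; congr minn; lia.
rewrite -actCM R_alpha -jC_mor ex_nd // gx_spec actEM mulS_gk.
by rewrite add0n.
Qed.

Lemma claimB x y s t : key y = key x -> (dx x + lvl s = dx y + lvl t)%N ->
  actE (uK (key x)) (ug (gx x + grp s)) = actE (uK (key x)) (ug (gx y + grp t)) ->
  actC (R (key x)) (mulS (sig x) s) = actC (R (key x)) (mulS (sig y) t).
Proof.
move=> hk hl hu.
have E1 : forall z r, mulS (sig z) r = mulS (ug (gx z + grp r)) (alpha (dx z + lvl r)).
  by move=> z r; rewrite /sig {1}(S_gk r) !mulS_gk addr0.
by rewrite !E1 -!actCM (R_unit hu) hl.
Qed.

Lemma const_lev x s a : actE (e x) s = iota a -> (m x <= lvl s)%N.
Proof. by move=> h; apply: mlev_le; left; exists a. Qed.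

Lemma nonA x s y t : actE (e x) s = actE (e y) t ->
  ~ (exists a, actE (e x) s = iota a) ->
  key y = key x /\
  actC (R (key x)) (mulS (sig x) s) = actC (R (key x)) (mulS (sig y) t).
Proof.
move=> hxy hnA.
case: (classic (T (actE (e x) s))) => hT.
  have hx := mlev_le hT.
  have hT' := hT; rewrite hxy in hT'; have hy := mlev_le hT'.
  have fixnd : forall z r, (m z <= lvl r)%N -> ~ (exists a, actE (e z) r = iota a) ->
      actE (e z) r = nd z.
    move=> z r hz hn; case: (mlev_spec (e z)) => _ [[a ha]|hf] _.
      by case: hn; exists (actA a (gk (grp r) (lvl r - m z))); rewrite ex_nd // hmor -ha.
    by rewrite ex_nd // hf.
  have ex := fixnd x s hx hnA.
  have ey : actE (e y) t = nd y by apply: fixnd => // -[a ha]; apply: hnA; exists a; rewrite hxy.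
  have hk : key y = key x by apply: (key_eq (g := 0)); rewrite actE1 -ex -ey hxy.
  split => //.
  rewrite claimA //; move: (claimA hy); rewrite hk => ->; by rewrite hxy.
have hlx : (lvl s < m x)%N.
  rewrite ltnNge; apply/negP => h; apply: hT; rewrite ex_nd //; apply: T_act.
  by case: (mlev_spec (e x)).
have hly : (lvl t < m y)%N.
  rewrite ltnNge; apply/negP => h; apply: hT; rewrite hxy ex_nd //; apply: T_act.
  by case: (mlev_spec (e y)).
have stepE : forall z r j, actE (actE (e z) r) (alpha j) =
    actE (actE (e z) (alpha (lvl r + j))) (ug (grp r)).
  move=> z r j; rewrite !actEM !mulS_gk {1}(S_gk r) mulS_gk addr0 add0r addn0 //.
have minx : forall j, T (actE (actE (e x) s) (alpha j)) <-> (m x <= lvl s + j)%N.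
  move=> j; rewrite stepE; split.
    move=> /T_unit hT1; rewrite leqNgt; apply/negP => hlt.
    by case: (mlev_spec (e x)) => _ _ /(_ _ hlt).
  move=> hle; apply: T_act.
  have -> : actE (e x) (alpha (lvl s + j)) =
      actE (nd x) (alpha (lvl s + j - m x)) by rewrite /nd actEM mulS_gk addr0; congr actE; congr gk; lia.
  by apply: T_act; case: (mlev_spec (e x)).
have miny : forall j, T (actE (actE (e y) t) (alpha j)) <-> (m y <= lvl t + j)%N.
  move=> j; rewrite stepE; split.
    move=> /T_unit hT1; rewrite leqNgt; apply/negP => hlt.
    by case: (mlev_spec (e y)) => _ _ /(_ _ hlt).
  move=> hle; apply: T_act.
  have -> : actE (e y) (alpha (lvl t + j)) =
      actE (nd y) (alpha (lvl t + j - m y)) by rewrite /nd actEM mulS_gk addr0; congr actE; congr gk; lia.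
  by apply: T_act; case: (mlev_spec (e y)).
have hj : (m x - lvl s = m y - lvl t)%N.
  have h1 := proj2 (minx (m x - lvl s)%N) (ltac:(lia)).
  have h2 := proj2 (miny (m y - lvl t)%N) (ltac:(lia)).
  rewrite hxy in minx h1.
  move: (proj1 (miny _) h1) (proj1 (minx _) h2); lia.
set j := (m x - lvl s)%N.
have nx : actE (actE (e x) s) (alpha j) = actE (nd x) (ug (grp s)).
  by rewrite stepE /nd; congr actE; congr actE; congr gk; rewrite /j; lia.
have ny : actE (actE (e y) t) (alpha j) = actE (nd y) (ug (grp t)).
  by rewrite stepE /nd; congr actE; congr actE; congr gk; rewrite /j; lia.
have hn : actE (nd x) (ug (grp s)) = actE (nd y) (ug (grp t)) by rewrite -nx -ny hxy.
have hk : key y = key x.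
  apply: (key_eq (g := grp s - grp t)).
  have -> : nd y = actE (actE (nd y) (ug (grp t))) (ug (- grp t)).
    by rewrite actEM mulS_gk addrN addn0 actE1.
  by rewrite -hn actEM mulS_gk addn0.
split => //.
apply: claimB => //.
  rewrite /dx hk; have := m_le_MK x; have := m_le_MK y; rewrite hk; lia.
have spl : forall g h : G, ug (g + h) = mulS (ug g) (ug h) by move=> g h; rewrite mulS_gk.
rewrite !spl -!actEM -gx_spec hn.
by have := gx_spec y; rewrite hk => <-.
Qed.

Definition trans (K : E -> Prop) (q : equation G X A) : seq (equation G unit A) :=
  match q with
  | EqConst x s a => if pb (key x = K) then [:: @EqConst G unit A tt (mulS (sig x) s) a] else [::]
  | EqVar x s y t =>
    if pb (exists a, actE (e x) s = iota a) then
      let a := epsilon ihA (fun a => actE (e x) s = iota a) in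
      (if pb (key x = K) then [:: @EqConst G unit A tt (mulS (sig x) s) a] else [::]) ++
      (if pb (key y = K) then [:: @EqConst G unit A tt (mulS (sig y) t) a] else [::])
    else if pb (key x = K) then [:: @EqVar G unit A tt (mulS (sig x) s) tt (mulS (sig y) t)] else [::]
  end.

Definition SigK K := flatten (map (trans K) Sigma).

Lemma inlist_cat (T0 : Type) (q : T0) l1 l2 : inlist q (l1 ++ l2) <-> inlist q l1 \/ inlist q l2.
Proof.
elim: l1 => [|y l1 IH] /=; first by split=> [h|[[]|h]]; [right|].
rewrite IH; tauto.
Qed.

Lemma inlist_flat (T0 T1 : Type) (f : T0 -> seq T1) (q : T1) l :
  inlist q (flatten (map f l)) <-> exists q', inlist q' l /\ inlist q (f q').
Proof.
elim: l => [|y l IH] /=; first by split=> [[]|[q' [[] _]]].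
rewrite inlist_cat IH; split.
  by case=> [h|[q' [h1 h2]]]; [exists y; split=> //; left | exists q'; split=> //; right].
case=> q' [[<-|h1] h2]; [by left| right; by exists q'].
Qed.

Lemma epsA x s (h : exists a, actE (e x) s = iota a) :
  actE (e x) s = iota (epsilon ihA (fun a => actE (e x) s = iota a)).
Proof. exact: (epsilon_spec ihA (fun a => actE (e x) s = iota a) h). Qed.

Lemma SigK_consistent x0 : consistent actA (SigK (key x0)).
Proof.
exists EC, actC, (fun a => jC (iota a)); split.
- exact: actC_act.
- by move=> a b /jC_inj /inj.
- by move=> a s; rewrite hmor jC_mor.
exists (fun _ => R (key x0)) => q /inlist_flat [q' [hq' hq]].
have hs := he hq'.
case: q' hq' hq hs => [x s y t|x s a] hq' /=.
- case: pbP => hA'.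
    move=> /inlist_cat [].
      case: pbP => // hk [] // <- /= _; rewrite -hk claimA; last by apply: const_lev (epsA hA').
      by rewrite -epsA.
    case: pbP => // hk [] // <- /= hxy; rewrite -hk claimA; last first.
      by apply: (const_lev (a := epsilon ihA (fun a => actE (e x) s = iota a))); rewrite -hxy -epsA.
    by rewrite -hxy -epsA.
  case: pbP => // hk [] // <- /= hxy.
  by case: (nonA hxy hA') => hk'; rewrite -hk.
- case: pbP => // hk [] // <- /= hxa.
  by rewrite -hk claimA ?hxa //; apply: const_lev hxa.
Qed.

Definition FK K := epsilon ihA
  (fun c => forall q, inlist q (SigK K) -> solves actA id (fun _ : unit => c) q).

Lemma FK_spec (hap : almost_pure actA) x :
  forall q, inlist q (SigK (key x)) -> solves actA id (fun _ : unit => FK (key x)) q.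
Proof.
apply: (epsilon_spec ihA (fun c => forall q, inlist q (SigK (key x)) ->
   solves actA id (fun _ : unit => c) q)).
case: (hap _ (SigK_consistent x)) => b hb; exists (b tt) => q /hb.
by case: q => [[] s [] t|[] s a].
Qed.

Lemma main_solve (hap : almost_pure actA) : solvable_in actA Sigma.
Proof.
exists (fun x => actA (FK (key x)) (sig x)) => q hq.
have hs := he hq.
case: q hq hs => [x s y t|x s a] hq /=.
- move=> hxy.
  case: (pbP (exists a, actE (e x) s = iota a)) => hA'.
    have h1 := FK_spec hap (x := x) (q := @EqConst G unit A tt (mulS (sig x) s)
       (epsilon ihA (fun a => actE (e x) s = iota a))).
    have h2 := FK_spec hap (x := y) (q := @EqConst G unit A tt (mulS (sig y) t)
       (epsilon ihA (fun a => actE (e x) s = iota a))).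
    rewrite !actAM /= in h1 h2 *; rewrite h1 ?h2 //.
      apply/inlist_flat; exists (@EqVar G X A x s y t); split => //=.
      case: pbP => // _; apply/inlist_cat; right; case: pbP => // _; by left.
    apply/inlist_flat; exists (@EqVar G X A x s y t); split => //=.
    case: pbP => // _; apply/inlist_cat; left; case: pbP => // _; by left.
  case: (nonA hxy hA') => hk _.
  have h1 := FK_spec hap (x := x) (q := @EqVar G unit A tt (mulS (sig x) s) tt (mulS (sig y) t)).
  rewrite hk !actAM; apply: h1.
  apply/inlist_flat; exists (@EqVar G X A x s y t); split => //=.
  case: pbP => // _; case: pbP => // _; by left.
- move=> hxa.
  have h1 := FK_spec hap (x := x) (q := @EqConst G unit A tt (mulS (sig x) s) a).
  rewrite actAM; apply: h1.
  apply/inlist_flat; exists (@EqConst G X A x s a); split => //=.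
  case: pbP => // _; by left.
Qed.

End Main.

Theorem mainTheorem5 (G : zmodType) (hG : ~ finitely_generated G)
  (A : Type) (actA : A -> S G -> A) (hA : is_act actA) :
  almost_pure actA <-> absolutely_pure actA.
Proof.
split; last first.
  by move=> h Sigma hc; apply: h.
move=> hap X Sigma [B [actB [iota [hB inj hm [b hb]]]]].
case: (classic (inhabited A)) => ihA.
  exact: (main_solve hA hB inj hm hb ihA hap).
case: (classic (inhabited X)) => [[x0]|hX].
  exfalso; apply: ihA.
  have hc : consistent actA ([::] : seq (equation G unit A)).
    by exists B, actB, iota; split => //; exists (fun _ => b x0) => q [].
  by case: (hap _ hc) => c _; constructor; exact: c tt.
exists (fun x => False_rect A (hX (inhabits x))) => q hq.
by exfalso; case: q hq => [x _ _ _|x _ _] _; apply: hX; constructor.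
Qed.
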